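(* Let $k\geq 4$ and let $G$ be a diregular $(2,k,+3)$-digraph. Let $u,v$ be distinct vertices with exactly one common out-neighbour $u_2$, and write $N^+(u)=\{u_1,u_2\}$, $N^+(v)=\{v_1,u_2\}$. Then $N^+(u_1)\neq N^+(v_1)$.
   Context: A digraph is $k$-geodetic if for every ordered pair of vertices $x,y$ there is at most one directed path from $x$ to $y$ of length at most $k$ (the trivial path counts). A diregular $(2,k,+3)$-digraph is a $k$-geodetic digraph of order $1+2+\dots+2^k+3$ in which every vertex has in- and out-degree $2$. $N^+(x)$ is the set of out-neighbours of $x$. *)

(* Defs.v *)
From mathcomp Require Import all_boot.
Set Implicit Arguments. Unset Strict Implicit. Unset Printing Implicit Defensive.

Definition outN (V : finType) (e : rel V) (x : V) : {set V} := [set y | e x y].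
Definition inN (V : finType) (e : rel V) (x : V) : {set V} := [set y | e y x].

(* A directed path (walk) from x to y of length size p is a sequence p with
   path e x p and last x p = y; the trivial path is p = [::]. *)
Definition k_geodetic (V : finType) (e : rel V) (k : nat) : Prop :=
  forall (x y : V) (p q : seq V),
    path e x p -> last x p = y -> size p <= k ->
    path e x q -> last x q = y -> size q <= k -> p = q.

Definition diregular2 (V : finType) (e : rel V) : Prop :=
  forall x : V, #|outN e x| = 2 /\ #|inN e x| = 2.

Definition dig_2k3 (V : finType) (e : rel V) (k : nat) : Prop :=
  [/\ k_geodetic e k, diregular2 e & #|V| = \sum_(i < k.+1) 2 ^ i + 3].

(* Main.v *)
Require Import Defs.
From mathcomp Require Import all_boot.
From mathcomp Require Import zify.
Set Implicit Arguments. Unset Strict Implicit. Unset Printing Implicit Defensive.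

Fixpoint reach (V : finType) (e : rel V) (n : nat) (x : V) {struct n} : {set V} :=
  match n with
  | 0 => [set x]
  | n'.+1 => x |: \bigcup_(y in outN e x) reach e n' y
  end.

Lemma reachS (V : finType) (e : rel V) n x y :
  (y \in reach e n.+1 x) = (y == x) || [exists z, e x z && (y \in reach e n z)].
Proof.
rewrite /= in_setU1; congr (_ || _).
apply/bigcupP/existsP => [[z]|[z /andP[]]].
  by rewrite inE => ?; exists z; apply/andP.
by exists z => //; rewrite inE.
Qed.

Lemma inR (V : finType) (e : rel V) n x y :
  y \in reach e n x <-> exists p, [/\ path e x p, last x p = y & size p <= n].
Proof.
elim: n x => [|n IH] x.
  rewrite /= inE; split => [/eqP->|[[|z p] [_ /= <- Hs]]] //.
  by exists [::].
rewrite reachS; split.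
  case/orP => [/eqP->|/existsP[z /andP[Hxz /IH[p [Hp Hl Hs]]]]].
    by exists [::].
  by exists (z :: p); rewrite /= Hxz Hp Hl.
case=> [[|z p] [/= Hp Hl Hs]]; first by rewrite Hl eqxx.
apply/orP; right; apply/existsP; exists z.
case/andP: Hp => Hxz Hp; rewrite Hxz /=; apply/IH; by exists p.
Qed.

Lemma R0 (V : finType) (e : rel V) n x : x \in reach e n x.
Proof. by apply/inR; exists [::]. Qed.

Lemma R_step (V : finType) (e : rel V) n x x' y :
  e x x' -> y \in reach e n x' -> y \in reach e n.+1 x.
Proof.
move=> H /inR[p [Hp Hl Hs]]; apply/inR; exists (x' :: p); by rewrite /= H Hp Hl.
Qed.

Lemma R_last (V : finType) (e : rel V) n x y z :
  y \in reach e n x -> e y z -> z \in reach e n.+1 x.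
Proof.
move=> /inR[p [Hp Hl Hs]] H; apply/inR; exists (rcons p z).
by rewrite rcons_path Hp Hl H last_rcons size_rcons.
Qed.

Lemma R_mono (V : finType) (e : rel V) m n x y :
  m <= n -> y \in reach e m x -> y \in reach e n x.
Proof.
move=> Hmn /inR[p [Hp Hl Hs]]; apply/inR; exists p; split => //.
exact: leq_trans Hmn.
Qed.

Lemma R_arc (V : finType) (e : rel V) x y : e x y -> y \in reach e 1 x.
Proof. move=> H; apply: R_step H (R0 _ _ _). Qed.

Lemma geo (V : finType) (e : rel V) k x p q :
  k_geodetic e k -> path e x p -> path e x q -> last x p = last x q ->
  size p <= k -> size q <= k -> p = q.
Proof. move=> Hg Hp Hq Hl Hsp Hsq; exact: (Hg x (last x p) p q). Qed.

Lemma H_cycle (V : finType) (e : rel V) k n x y :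
  k_geodetic e k -> n < k -> y \in reach e n x -> e y x -> False.
Proof.
move=> Hg Hn /inR[p [Hp Hl Hs]] H.
have := @geo _ _ _ x (rcons p x) [::] Hg.
rewrite rcons_path Hp Hl H last_rcons size_rcons /=.
move/(_ isT isT erefl (leq_ltn_trans Hs Hn) isT); by case: p {Hp Hl Hs}.
Qed.
Lemma H_two (V : finType) (e : rel V) k n1 n2 x y1 y2 z :
  k_geodetic e k -> n1 < k -> n2 < k -> y1 \in reach e n1 x -> y2 \in reach e n2 x ->
  e y1 z -> e y2 z -> y1 != y2 -> False.
Proof.
move=> Hg H1 H2 /inR[p [Hp Hl Hs]] /inR[q [Hq Hl' Hs']] E1 E2 /eqP Hne.
have := @geo _ _ _ x (rcons p z) (rcons q z) Hg.
rewrite !rcons_path Hp Hq Hl Hl' E1 E2 !last_rcons !size_rcons.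
move/(_ isT isT erefl (leq_ltn_trans Hs H1) (leq_ltn_trans Hs' H2)).
by move/rcons_inj => [Epq]; apply: Hne; rewrite -Hl -Hl' Epq.
Qed.

Lemma H_first (V : finType) (e : rel V) k n1 n2 x x1 x2 z :
  k_geodetic e k -> n1 < k -> n2 < k -> e x x1 -> e x x2 -> x1 != x2 ->
  z \in reach e n1 x1 -> z \in reach e n2 x2 -> False.
Proof.
move=> Hg H1 H2 E1 E2 /eqP Hne /inR[p [Hp Hl Hs]] /inR[q [Hq Hl' Hs']].
have := @geo _ _ _ x (x1 :: p) (x2 :: q) Hg.
rewrite /= E1 E2 Hp Hq Hl Hl'.
by move/(_ isT isT erefl (leq_ltn_trans Hs H1) (leq_ltn_trans Hs' H2)) => [].
Qed.

Lemma H_exact (V : finType) (e : rel V) k m x P t :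
  k_geodetic e k -> path e x P -> size P = m -> m < k -> e (last x P) t ->
  t \in reach e m x -> False.
Proof.
move=> Hg HP Hs Hm Ht /inR[q [Hq Hl Hsq]].
have := @geo _ _ _ x (rcons P t) q Hg.
rewrite rcons_path HP Ht last_rcons Hl size_rcons Hs.
move/(_ isT Hq erefl Hm (leq_trans Hsq (ltnW Hm))) => E.
by move: Hsq; rewrite -E size_rcons Hs ltnn.
Qed.

Lemma ext_path (V : finType) (e : rel V) :
  (forall x, exists y, e x y) -> forall m x, exists q, path e x q /\ size q = m.
Proof.
move=> He; elim=> [|m IH] x; first by exists [::].
case: (He x) => y Hy; case: (IH y) => q [Hq Hs].
by exists (y :: q); rewrite /= Hy Hq Hs.
Qed.

Lemma card2_split (T : finType) (A : {set T}) a :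
  #|A| = 2 -> a \in A -> exists b, b != a /\ A = [set a; b].
Proof.
move=> H Ha; move/eqP/cards2P: H => [x [y [Hxy HA]]].
move: Ha; rewrite HA !inE => /orP[/eqP->|/eqP->].
  by exists y; rewrite eq_sym.
by exists x; split => //; rewrite setUC.
Qed.

Lemma card2_in (T : finType) (A : {set T}) a b x :
  #|A| = 2 -> a \in A -> b \in A -> a != b -> x \in A -> x = a \/ x = b.
Proof.
move=> H Ha Hb Hab Hx; case: (card2_split H Ha) => c [Hc HA].
move: Hb Hx; rewrite HA !inE => /orP[/eqP Hba|/eqP->].
  by rewrite Hba eqxx in Hab.
by case/orP => /eqP->; [left|right].
Qed.

Lemma sum_pow2S j : \sum_(i < j.+2) 2 ^ i = 1 + 2 * \sum_(i < j.+1) 2 ^ i.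
Proof.
rewrite big_ord_recl expn0 big_distrr /=; congr (_ + _).
by apply: eq_bigr => i _; rewrite /bump /= add1n expnS.
Qed.

Lemma card_reach (V : finType) (e : rel V) k :
  k_geodetic e k -> (forall x, #|outN e x| = 2) ->
  forall j, j <= k -> forall x, #|reach e j x| = \sum_(i < j.+1) 2 ^ i.
Proof.
move=> Hg Hd; elim=> [|j IH] Hj x; first by rewrite /= cards1 big_ord1.
move/eqP/cards2P: (Hd x) => [x1 [x2 [H12 Hout]]].
have E1 : e x x1 by have := set21 x1 x2; rewrite -Hout inE.
have E2 : e x x2 by have := set22 x1 x2; rewrite -Hout inE.
have -> : reach e j.+1 x = x |: (reach e j x1 :|: reach e j x2).
  apply/setP => y; rewrite reachS in_setU1 in_setU; congr (_ || _).
  apply/existsP/orP => [[z /andP[Hz Hy]]|[Hy|Hy]].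
  - have : z \in outN e x by rewrite inE.
    by rewrite Hout !inE => /orP[] /eqP Ez; [left|right]; rewrite -Ez.
  - by exists x1; rewrite E1.
  - by exists x2; rewrite E2.
rewrite cardsU1 cardsU !IH ?(ltnW Hj) // sum_pow2S.
have -> : reach e j x1 :&: reach e j x2 = set0.
  apply/setP => y; rewrite !inE; apply/negP => /andP[Y1 Y2].
  exact: (H_first Hg Hj Hj E1 E2 H12 Y1 Y2).
have -> : x \notin reach e j x1 :|: reach e j x2.
  rewrite in_setU; apply/negP => /orP[] Hx.
    exact: (H_cycle Hg Hj Hx E1).
  exact: (H_cycle Hg Hj Hx E2).
by rewrite cards0 subn0 addnn mul2n.
Qed.
Lemma reachS2 (V : finType) (e : rel V) n x x1 x2 y :
  outN e x = [set x1; x2] ->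
  (y \in reach e n.+1 x) = [|| y == x, y \in reach e n x1 | y \in reach e n x2].
Proof.
move=> Hout; rewrite reachS; congr (_ || _).
have E z : e x z = (z == x1) || (z == x2) by have := erefl (z \in outN e x); rewrite {2}Hout !inE.
apply/existsP/orP => [[z /andP[Hz Hy]]|[Hy|Hy]].
- by move: Hz; rewrite E => /orP[] /eqP Ez; [left|right]; rewrite -Ez.
- by exists x1; rewrite E eqxx Hy.
- by exists x2; rewrite E eqxx orbT Hy.
Qed.

Lemma leaf_ext (V : finType) (e : rel V) k x p m :
  k_geodetic e k -> (forall z, exists y, e z y) -> m < k ->
  path e x p -> size p <= m ->
  exists l n, [/\ l \in reach e n (last x p), n + size p = m &
                 forall t, e l t -> t \notin reach e m x].
Proof.
move=> Hg Hex Hm Hp Hs.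
case: (ext_path Hex (m - size p) (last x p)) => q [Hq Hsq].
exists (last (last x p) q), (size q); split.
- by apply/inR; exists q.
- by rewrite Hsq subnK.
- move=> t Ht; apply/negP => Ht'.
  apply: (@H_exact _ _ k m x (p ++ q) t Hg _ _ Hm _ Ht').
  + by rewrite cat_path Hp Hq.
  + by rewrite size_cat Hsq subnKC.
  + by rewrite last_cat.
Qed.

Lemma in4 (T : finType) (a b c d t : T) :
  t \in [set a; b; c; d] -> [\/ t = a, t = b, t = c | t = d].
Proof.
rewrite !inE => /orP[/orP[/orP[]|]|] /eqP ->;
  [by apply: Or41|by apply: Or42|by apply: Or43|by apply: Or44].
Qed.
Theorem lemma8 (k : nat) (V : finType) (e : rel V) (u v u1 u2 v1 : V) :
  4 <= k -> dig_2k3 e k -> u != v ->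
  outN e u :&: outN e v = [set u2] ->
  outN e u = [set u1; u2] -> outN e v = [set v1; u2] ->
  outN e u1 != outN e v1.
Proof.
move=> Hk [Hg Hdeg Hcard] Huv Hint Hou Hov.
apply/negP => /eqP Htw.
have Hd x : #|outN e x| = 2 by case: (Hdeg x).
have Hi x : #|inN e x| = 2 by case: (Hdeg x).
have arc x y : e x y = (y \in outN e x) by rewrite inE.
have iarc x y : e x y = (x \in inN e y) by rewrite inE.
have Hex : forall z, exists y, e z y.
  move=> z; have : 0 < #|outN e z| by rewrite Hd.
  by case/card_gt0P => y; rewrite inE => ?; exists y.
case: k Hk Hg Hcard => [|[|J]] Hk Hg Hcard; [by []|by []|].
have HJ : 2 <= J by [].
have Euu1 : e u u1 by rewrite arc Hou set21.
have Euu2 : e u u2 by rewrite arc Hou set22.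
have Evv1 : e v v1 by rewrite arc Hov set21.
have Evu2 : e v u2 by rewrite arc Hov set22.
move/eqP/cards2P: (Hd u1) => [a [b [Hab Hou1]]].
have Eu1a : e u1 a by rewrite arc Hou1 set21.
have Ev1a : e v1 a by rewrite arc -Htw Hou1 set21.
have Hu12 : u1 != u2 by move: (Hd u); rewrite Hou cards2; case: (_ != _).
have Hv12 : v1 != u2 by move: (Hd v); rewrite Hov cards2; case: (_ != _).
have Huv1 : u1 != v1.
  apply/eqP => E; have : u1 \in outN e u :&: outN e v by rewrite inE Hou Hov E !set21.
  by rewrite Hint inE (negbTE Hu12).
have Hlt : forall n, n <= J.+1 -> n < J.+2 by [].
have noloop x : ~~ e x x.
  by apply/negP => H; apply: (H_cycle Hg (isT : 0 < J.+2) (R0 _ _ _) H).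
have neq_arc x y : e x y -> x != y.
  by move=> H; apply/eqP => E; move: H; rewrite E; apply/negP.
have twin : forall n t, t \in reach e n.+1 u1 -> t = u1 \/ t \in reach e n.+1 v1.
  move=> n t; rewrite reachS => /orP[/eqP->|/existsP[z /andP[Hz Ht]]]; first by left.
  by right; apply: R_step Ht; rewrite arc -Htw -arc.
have twin' : forall n t, t \in reach e n.+1 v1 -> t = v1 \/ t \in reach e n.+1 u1.
  move=> n t; rewrite reachS => /orP[/eqP->|/existsP[z /andP[Hz Ht]]]; first by left.
  by right; apply: R_step Ht; rewrite arc Htw -arc.
have P_u_u1 x : e x u -> e x u1 -> False.
  move=> H1 H2; apply: (H_two Hg (isT : 1 < J.+2) (isT : 0 < J.+2) (R_arc H1) (R0 _ _ _) Euu1 H2).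
  by rewrite eq_sym neq_arc.
have P_v_v1 x : e x v -> e x v1 -> False.
  move=> H1 H2; apply: (H_two Hg (isT : 1 < J.+2) (isT : 0 < J.+2) (R_arc H1) (R0 _ _ _) Evv1 H2).
  by rewrite eq_sym neq_arc.
have P_u_v x : e x u -> e x v -> False.
  by move=> H1 H2; apply: (H_two Hg (isT : 1 < J.+2) (isT : 1 < J.+2) (R_arc H1) (R_arc H2) Euu2 Evu2 Huv).
have P_u1_v1 x : e x u1 -> e x v1 -> False.
  by move=> H1 H2; apply: (H_two Hg (isT : 1 < J.+2) (isT : 1 < J.+2) (R_arc H1) (R_arc H2) Eu1a Ev1a Huv1).
have P_u_v1 x : e x u -> e x v1 -> False.
  by move=> H1 H2; apply: (H_two Hg (Hlt 2 (ltnW HJ)) (isT : 1 < J.+2) (R_last (R_arc H1) Euu1) (R_arc H2) Eu1a Ev1a Huv1).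
have P_v_u1 x : e x v -> e x u1 -> False.
  by move=> H1 H2; apply: (H_two Hg (Hlt 2 (ltnW HJ)) (isT : 1 < J.+2) (R_last (R_arc H1) Evv1) (R_arc H2) Ev1a Eu1a (ltac:(by rewrite eq_sym) : v1 != u1)).
have NoTwo : forall x t1 t2, t1 != t2 -> t1 \in [set u; u1; v; v1] ->
    t2 \in [set u; u1; v; v1] -> e x t1 -> e x t2 -> False.
  move=> x t1 t2 Hne /in4[] E1 /in4[] E2;
    rewrite {}E1 {}E2 in Hne * => H1 H2;
    first [ by rewrite eqxx in Hne
          | exact: P_u_u1 H1 H2 | exact: P_u_u1 H2 H1
          | exact: P_v_v1 H1 H2 | exact: P_v_v1 H2 H1
          | exact: P_u_v H1 H2 | exact: P_u_v H2 H1
          | exact: P_u1_v1 H1 H2 | exact: P_u1_v1 H2 H1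
          | exact: P_u_v1 H1 H2 | exact: P_u_v1 H2 H1
          | exact: P_v_u1 H1 H2 | exact: P_v_u1 H2 H1 ].
have Hvu : v \notin reach e J.+2 u.
  rewrite (reachS2 _ _ Hou); apply/negP => /or3P[/eqP E|H|H].
  - by rewrite E eqxx in Huv.
  - case/twin: H => [E|H].
      rewrite E in Evu2.
      apply: (H_two Hg (isT : 1 < J.+2) (isT : 0 < J.+2) (R_arc Euu1) (R0 _ _ _) Evu2 Euu2).
      by rewrite eq_sym neq_arc.
    exact: (H_cycle Hg (Hlt _ (leqnn _)) H Evv1).
  - exact: (H_cycle Hg (Hlt _ (leqnn _)) H Evu2).
have Hv1u : v1 \notin reach e J.+2 u.
  rewrite (reachS2 _ _ Hou); apply/negP => /or3P[/eqP E|H|H].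
  - rewrite E in Evv1.
    exact: (H_two Hg (isT : 1 < J.+2) (isT : 0 < J.+2) (R_arc Evv1) (R0 _ _ _) Euu2 Evu2 Huv).
  - move: H; rewrite reachS => /orP[/eqP E|/existsP[z /andP[Hz H]]].
      by rewrite E eqxx in Huv1.
    have Ev1z : e v1 z by rewrite arc -Htw -arc.
    exact: (H_cycle Hg (leqnSn J.+1) H Ev1z).
  - exact: (H_first Hg (Hlt _ (leqnn _)) (isT : 0 < J.+2) Evu2 Evv1 (ltac:(by rewrite eq_sym)) H (R0 _ _ _)).
have Hcu := card_reach Hg Hd (leqnn _) u.
set C := ~: reach e J.+2 u.
have HC : #|C| = 3.
  by have := cardsC (reach e J.+2 u); rewrite Hcu Hcard => /eqP; rewrite eqn_add2l => /eqP.
have HvC : v \in C by rewrite inE Hvu.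
have Hv1C : v1 \in C by rewrite inE Hv1u.
have Hvv1 : v1 != v by rewrite eq_sym neq_arc.
have HC1 : #|C :\ v :\ v1| = 1.
  move: (cardsD1 v C) (cardsD1 v1 (C :\ v)); rewrite HC HvC in_setD1 Hvv1 Hv1C /=.
  by move=> H1 H2; move: H1; rewrite H2 !add1n => -[].
move/eqP/cards1P: HC1 => [r Hr].
have : r \in C :\ v :\ v1 by rewrite Hr set11.
rewrite in_setD1 in_setD1 in_setC => /andP[Hrv1 /andP[Hrv HrR]].
have cover : forall t, [|| t \in reach e J.+2 u, t == v, t == v1 | t == r].
  move=> t; case Ht: (t \in reach e J.+2 u); first by [].
  case: (eqVneq t v) => [->|Htv]; first by rewrite ?eqxx !orbT.
  case: (eqVneq t v1) => [->|Htv1]; first by rewrite ?eqxx !orbT.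
  have : t \in C :\ v :\ v1 by rewrite in_setD1 Htv1 in_setD1 Htv in_setC Ht.
  by rewrite Hr inE => ->; rewrite !orbT.
have in_u2 : forall x, e x u2 -> x = u \/ x = v.
  by move=> x Hx; apply: (card2_in (Hi u2)); rewrite ?inE.
have Hru : r != u by apply/negP => /eqP E; move: HrR; rewrite E R0.
have Hru1 : r != u1.
  by apply/negP => /eqP E; move: HrR; rewrite E (R_step Euu1 (R0 _ _ _)).
have Hru2 : ~~ e r u2 by apply/negP => /in_u2 [E|E]; [rewrite E eqxx in Hru|rewrite E eqxx in Hrv].
have Hsub : forall t, t \in [set u; v] -> t \in [set u; u1; v; v1].
  by move=> t; rewrite !inE => /orP[]->; rewrite ?orbT.
have caseA : forall x1, e r x1 -> x1 \in [set u1; v1] ->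
    (forall t, t \in reach e J.+1 u1 -> t = u1 \/ t \in reach e J.+1 x1) -> False.
  move=> x1 Hrx1 Hx1 Tw.
  have Hx1' : x1 \in [set u; u1; v; v1].
    by move: Hx1; rewrite !inE => /orP[]->; rewrite ?orbT.
  case: (card2_split (Hd r) (_ : x1 \in outN e r)) => [|y [Hyx1 Hor]]; first by rewrite inE.
  have Hry : e r y by rewrite arc Hor set22.
  have Hy4 : y \notin [set u; u1; v; v1].
    by apply/negP => Hy; apply: (NoTwo r y x1 Hyx1 Hy Hx1' Hry Hrx1).
  have Hyx1r : y \notin reach e J.+1 x1.
    by apply/negP => H; apply: (H_first Hg (isT : 0 < J.+2) (Hlt _ (leqnn _)) Hry Hrx1 Hyx1 (R0 _ _ _) H).
  move: Hy4; rewrite !inE => /norP[/norP[/norP[Hyu Hyu1] Hyv] Hyv1].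
  have Hyu1r : y \notin reach e J.+1 u1.
    apply/negP => /Tw[E|H]; first by rewrite E eqxx in Hyu1.
    by rewrite H in Hyx1r.
  have Hyr : y != r by rewrite eq_sym neq_arc.
  have Hyu2 : y \in reach e J.+1 u2.
    move: (cover y); rewrite (reachS2 _ _ Hou) (negbTE Hyu) (negbTE Hyu1r).
    by rewrite (negbTE Hyv) (negbTE Hyv1) (negbTE Hyr) !orbF.
  have Hyne : y != u2 by apply/negP => /eqP E; rewrite -E Hry in Hru2.
  case/inR: Hyu2 => p [Hp Hl Hs].
  have Hsp : 0 < size p.
    by case: p Hp Hl {Hs} => [/= _ E|//]; rewrite E eqxx in Hyne.
  case: (leaf_ext Hg Hex (Hlt _ (leqnn _)) Hp Hs) => l [n [Hl_in Hn Hleaf]].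
  rewrite Hl in Hl_in.
  have Hn' : n.+1 < J.+2 by move: Hn Hsp; clear; lia.
  have Ht : forall t, e l t -> t \in [set u; u1; v; v1].
    move=> t Elt.
    have Htr : t \in reach e n.+1 y := R_last Hl_in Elt.
    have T1 : t \notin reach e J.+1 x1.
      by apply/negP => H; apply: (H_first Hg Hn' (Hlt _ (leqnn _)) Hry Hrx1 Hyx1 Htr H).
    have T2 : t != r.
      apply/negP => /eqP E; rewrite E in Elt.
      exact: (H_cycle Hg Hn' (R_step Hry Hl_in) Elt).
    have T3 := Hleaf t Elt.
    move: (cover t); rewrite (reachS2 _ _ Hou) (negbTE T2) (negbTE T3) !orbF.
    case/orP => [/orP[/eqP->|/Tw[->|H]]|/orP[/eqP->|/eqP->]]; rewrite ?inE ?eqxx ?orbT //.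
    by rewrite H in T1.
  move/eqP/cards2P: (Hd l) => [t1 [t2 [H12 Hol]]].
  have El1 : e l t1 by rewrite arc Hol set21.
  have El2 : e l t2 by rewrite arc Hol set22.
  exact: (NoTwo l t1 t2 H12 (Ht _ El1) (Ht _ El2) El1 El2).
case Hru1' : (e r u1).
  apply: (caseA u1 Hru1' _ _); first by rewrite !inE eqxx.
  by move=> t Ht; right.
case Hrv1' : (e r v1).
  by apply: (caseA v1 Hrv1' _ (twin J)); rewrite !inE eqxx orbT.
case: (card2_split (Hi u1) (_ : u \in inN e u1)) => [|w [Hwu Hin1]]; first by rewrite inE.
have Ewu1 : e w u1 by rewrite iarc Hin1 set22.
case: (card2_split (Hi v1) (_ : v \in inN e v1)) => [|w' [Hw'v Hin2]]; first by rewrite inE.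
have Ew'v1 : e w' v1 by rewrite iarc Hin2 set22.
have Hw_u2 : w \in reach e J.+1 u2.
  have Hwv : w != v.
    by apply/negP => /eqP E; move: Ewu1; rewrite E arc Hov !inE (negbTE Huv1) (negbTE Hu12).
  have Hwv1 : w != v1.
    apply/negP => /eqP E; move: Ewu1; rewrite E arc -Htw -arc => H.
    by move: (noloop u1); rewrite H.
  have Hwr : w != r by apply/negP => /eqP E; rewrite E Hru1' in Ewu1.
  have Hwu1 : w \notin reach e J.+1 u1.
    by apply/negP => H; apply: (H_cycle Hg (Hlt _ (leqnn _)) H Ewu1).
  move: (cover w); rewrite (reachS2 _ _ Hou) (negbTE Hwu) (negbTE Hwu1).
  by rewrite (negbTE Hwv) (negbTE Hwv1) (negbTE Hwr) !orbF.
have Hw_nJ : w \notin reach e J u2.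
  apply/negP => H.
  exact: (H_first Hg (Hlt _ (leqnn _)) (isT : 0 < J.+2) Euu2 Euu1 (ltac:(by rewrite eq_sym)) (R_last H Ewu1) (R0 _ _ _)).
have Hw'_u2 : w' \in reach e J.+1 u2.
  have Hw'v1 : w' != v1 by apply: neq_arc.
  have Hw'r : w' != r by apply/negP => /eqP E; rewrite E Hrv1' in Ew'v1.
  have Hw'u : w' != u.
    by apply/negP => /eqP E; move: Ew'v1; rewrite E arc Hou !inE eq_sym (negbTE Huv1) (negbTE Hv12).
  have Hw'u1 : w' \notin reach e J.+1 u1.
    apply/negP => /twin[E|H].
      move: Ew'v1; rewrite E arc Htw -arc => H.
      by move: (noloop v1); rewrite H.
    exact: (H_cycle Hg (Hlt _ (leqnn _)) H Ew'v1).
  move: (cover w'); rewrite (reachS2 _ _ Hou) (negbTE Hw'u) (negbTE Hw'u1).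
  by rewrite (negbTE Hw'v) (negbTE Hw'v1) (negbTE Hw'r) !orbF.
have Hw'_nJ : w' \notin reach e J u2.
  apply/negP => H.
  exact: (H_first Hg (Hlt _ (leqnn _)) (isT : 0 < J.+2) Evu2 Evv1 (ltac:(by rewrite eq_sym)) (R_last H Ew'v1) (R0 _ _ _)).
have exact_path : forall x, x \in reach e J.+1 u2 -> x \notin reach e J u2 ->
    exists P, [/\ path e u2 P, last u2 P = x & size P = J.+1].
  move=> x /inR[p [Hp Hl Hs]] Hn; exists p; split => //.
  have : ~~ (size p <= J) by apply/negP => H; move/negP: Hn; apply; apply/inR; exists p.
  by move: Hs; clear; lia.
have to_r : forall x y0, e x y0 -> y0 \in [set u1; v1] ->
    (forall t, t \in reach e J.+1 u1 -> t = u1 \/ t \in reach e J.+1 y0) ->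
    x \in reach e J.+1 u2 -> x \notin reach e J u2 -> e x r.
  move=> x y0 Hxy0 Hy0 Tw Hx1 Hx2.
  have Hy0' : y0 \in [set u; u1; v; v1].
    by move: Hy0; rewrite !inE => /orP[]->; rewrite ?orbT.
  case: (card2_split (Hd x) (_ : y0 \in outN e x)) => [|x2 [Hx2y0 Hox]]; first by rewrite inE.
  have Exx2 : e x x2 by rewrite arc Hox set22.
  have H4 : x2 \notin [set u; u1; v; v1].
    by apply/negP => H; apply: (NoTwo x x2 y0 Hx2y0 H Hy0' Exx2 Hxy0).
  move: H4; rewrite !inE => /norP[/norP[/norP[Hx2u Hx2u1] Hx2v] Hx2v1].
  have Hx2a : x2 \notin reach e J.+1 u2.
    case: (exact_path x Hx1 Hx2) => P [HP HlP HsP].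
    apply/negP; apply: (H_exact Hg HP HsP (Hlt _ (leqnn _))); by rewrite HlP.
  have Hx2b : x2 \notin reach e J.+1 y0.
    by apply/negP => H; apply: (H_first Hg (isT : 0 < J.+2) (Hlt _ (leqnn _)) Exx2 Hxy0 Hx2y0 (R0 _ _ _) H).
  have Hx2c : x2 \notin reach e J.+1 u1.
    apply/negP => /Tw[E|H]; first by rewrite E eqxx in Hx2u1.
    by rewrite H in Hx2b.
  move: (cover x2); rewrite (reachS2 _ _ Hou) (negbTE Hx2u) (negbTE Hx2c) (negbTE Hx2a).
  by rewrite (negbTE Hx2v) (negbTE Hx2v1) /= => /eqP <-.
have Ewr : e w r.
  apply: (to_r w u1 Ewu1 _ _ Hw_u2 Hw_nJ); first by rewrite !inE eqxx.
  by move=> t Ht; right.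
have Ew'r : e w' r.
  by apply: (to_r w' v1 Ew'v1 _ (twin J) Hw'_u2 Hw'_nJ); rewrite !inE eqxx orbT.
have Hrv1n : r != v1 by rewrite Hrv1.
have Hr2 : forall y, e r y -> y \in [set u; v].
  move=> y Hry.
  have Hyu1 : y != u1 by apply/negP => /eqP E; rewrite E Hru1' in Hry.
  have Hyv1 : y != v1 by apply/negP => /eqP E; rewrite E Hrv1' in Hry.
  have Hyr : y != r by rewrite eq_sym neq_arc.
  have Hyu1r : y \notin reach e J.+1 u1.
    by apply/negP => H; apply: (H_first Hg (isT : 1 < J.+2) (Hlt _ (leqnn _)) Ewr Ewu1 Hru1 (R_arc Hry) H).
  have Hyne : y != u2 by apply/negP => /eqP E; rewrite -E Hry in Hru2.
  have Hyu2 : y \notin reach e J.+1 u2.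
    apply/negP => Hy.
    case Hu2y : (e u2 y).
      case: (card2_split (Hd u2) (_ : y \in outN e u2)) => [|y' [Hy'y Hou2]]; first by rewrite inE.
      have split_r : forall x, e x r -> x \in reach e J.+1 u2 -> x \notin reach e J u2 ->
          x \in reach e J y'.
        move=> x Hxr; rewrite (reachS2 _ _ Hou2) => /or3P[/eqP E|H|H] Hn //.
          by move: Hn; rewrite E R0.
        by case: (H_cycle Hg (Hlt _ (leqnn _)) (R_step Hry H) Hxr).
      have W1 := split_r w Ewr Hw_u2 Hw_nJ.
      have W2 := split_r w' Ew'r Hw'_u2 Hw'_nJ.
      exact: (H_two Hg (Hlt _ (leqnn _)) (Hlt _ (leqnn _)) (R_last W1 Ewu1) (R_last W2 Ew'v1) Eu1a Ev1a Huv1).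
    case/inR: Hy => p [Hp Hl Hs].
    have Hsp : 1 < size p.
      case: p Hp Hl {Hs} => [/= _ E|z [|z' p]] //=; first by rewrite E eqxx in Hyne.
      by rewrite andbT => Hz E; rewrite -E Hz in Hu2y.
    case: (leaf_ext Hg Hex (Hlt _ (leqnn _)) Hp Hs) => l [n [Hl_in Hn Hleaf]].
    rewrite Hl in Hl_in.
    have Hn' : n.+2 < J.+2 by move: Hn Hsp; clear; lia.
    have Hn'' : n.+1 < J.+2 by move: Hn Hsp; clear; lia.
    have Ht : forall t, e l t -> t \in [set u; u1; v; v1].
      move=> t Elt.
      have Htr : t \in reach e n.+2 r := R_step Hry (R_last Hl_in Elt).
      have T1 : t \notin reach e J.+1 u1.
        by apply/negP => H; apply: (H_first Hg Hn' (Hlt _ (leqnn _)) Ewr Ewu1 Hru1 Htr H).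
      have T2 : t != v1.
        apply/negP => /eqP E; rewrite E in Htr.
        exact: (H_first Hg Hn' (isT : 0 < J.+2) Ew'r Ew'v1 Hrv1n Htr (R0 _ _ _)).
      have T3 : t != r.
        apply/negP => /eqP E; rewrite E in Elt.
        exact: (H_cycle Hg Hn'' (R_step Hry Hl_in) Elt).
      have T4 := Hleaf t Elt.
      move: (cover t); rewrite (reachS2 _ _ Hou) (negbTE T1) (negbTE T4).
      rewrite (negbTE T2) (negbTE T3) !orbF.
      by case/orP => /eqP->; rewrite !inE eqxx ?orbT.
    move/eqP/cards2P: (Hd l) => [t1 [t2 [H12 Hol]]].
    have El1 : e l t1 by rewrite arc Hol set21.
    have El2 : e l t2 by rewrite arc Hol set22.
    exact: (NoTwo l t1 t2 H12 (Ht _ El1) (Ht _ El2) El1 El2).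
  move: (cover y); rewrite (reachS2 _ _ Hou) (negbTE Hyu1r) (negbTE Hyu2).
  rewrite (negbTE Hyv1) (negbTE Hyr) !orbF.
  by case/orP => /eqP->; rewrite !inE eqxx ?orbT.
move/eqP/cards2P: (Hd r) => [y1 [y2 [H12 Hor]]].
have Er1 : e r y1 by rewrite arc Hor set21.
have Er2 : e r y2 by rewrite arc Hor set22.
exact: (NoTwo r y1 y2 H12 (Hsub _ (Hr2 _ Er1)) (Hsub _ (Hr2 _ Er2)) Er1 Er2).
Qed.
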